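(* Let $f\colon\mathbb{R}^n\to\mathbb{R}$ be a strictly convex quadratic function, $f(x)=\tfrac12x^TAx+b^Tx+c$ with $A$ symmetric positive definite, with unique minimizer $x^*$. Then the linesearch-free BFGS method, started from any $x_0\in\mathbb{R}^n$ and any symmetric positive definite $H_0$, generates iterates converging to $x^*$.
   Context: The unit-step BFGS update at a point $x$ with $g=\nabla f(x)\ne 0$ maps a symmetric positive definite $H$ to $H_+=VHV^T+\frac{ss^T}{s^Ty}$, where $s=-Hg$, $x_+=x+s$, $y=\nabla f(x_+)-g$, $V=I-\frac{sy^T}{s^Ty}$. The linesearch-free BFGS method: given the current iterate $x_k$ and matrix $H$, compute $s=-H\nabla f(x_k)$, replace $H$ by its unit-step BFGS update at $x_k$, and set $x_{k+1}=x_k+s$ if $f(x_k+s)<f(x_k)$, and $x_{k+1}=x_k$ otherwise; repeat. (If an iterate equals the minimizer, the gradient vanishes and the method stops there.) *)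

(* Defs.v *)
From HB Require Import structures.
From mathcomp Require Import all_boot all_order all_algebra.
From mathcomp Require Import all_classical all_reals all_analysis.
Set Implicit Arguments. Unset Strict Implicit. Unset Printing Implicit Defensive.
Import Order.TTheory GRing.Theory Num.Theory.
Local Open Scope ring_scope.

Definition spd (R : realType) (n : nat) (M : 'M[R]_n) : Prop :=
  M^T = M /\ forall v : 'cV[R]_n, v != 0 -> 0 < (v^T *m M *m v) 0 0.

Definition quadf (R : realType) (n : nat) (A : 'M[R]_n) (b : 'cV[R]_n) (c : R)
  (x : 'cV[R]_n) : R :=
  (x^T *m A *m x) 0 0 / 2 + (b^T *m x) 0 0 + c.

Definition quadgrad (R : realType) (n : nat) (A : 'M[R]_n) (b : 'cV[R]_n)
  (x : 'cV[R]_n) : 'cV[R]_n := A *m x + b.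

Definition bfgs_update (R : realType) (n : nat) (H : 'M[R]_n) (s y : 'cV[R]_n)
  : 'M[R]_n :=
  let sy := (s^T *m y) 0 0 in
  let V := 1%:M - sy^-1 *: (s *m y^T) in
  V *m H *m V^T + sy^-1 *: (s *m s^T).

Definition bfgs_step (R : realType) (n : nat) (A : 'M[R]_n) (b : 'cV[R]_n) (c : R)
  (st : 'cV[R]_n * 'M[R]_n) : 'cV[R]_n * 'M[R]_n :=
  let (x, H) := st in
  let g := quadgrad A b x in
  if g == 0 then (x, H) else
  let s := - (H *m g) in
  let y := quadgrad A b (x + s) - g in
  let H' := bfgs_update H s y in
  let x' := if quadf A b c (x + s) < quadf A b c x then x + s else x in
  (x', H').

Definition bfgs_seq (R : realType) (n : nat) (A : 'M[R]_n) (b : 'cV[R]_n) (c : R)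
  (x0 : 'cV[R]_n) (H0 : 'M[R]_n) (k : nat) : 'cV[R]_n * 'M[R]_n :=
  iter k (bfgs_step A b c) (x0, H0).

(* Main.v *)
Require Import Defs.
From HB Require Import structures.
From mathcomp Require Import all_boot all_order all_algebra.
From mathcomp Require Import all_classical all_reals all_analysis.
From mathcomp Require Import lra ring zify.
Import Order.TTheory GRing.Theory Num.Theory.
Import numFieldNormedType.Exports.
Local Open Scope classical_set_scope.
Local Open Scope ring_scope.
Set Implicit Arguments. Unset Strict Implicit. Unset Printing Implicit Defensive.

Section Dot.
Variable R : rcfType.
Variable n : nat.
Implicit Types (u v w : 'cV[R]_n) (M P Q : 'M[R]_n).

Definition dot u v : R := (u^T *m v) 0 0.

Lemma dotE u v : dot u v = \sum_i u i 0 * v i 0.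
Proof. by rewrite /dot !mxE; apply: eq_bigr => i _; rewrite mxE. Qed.

Lemma dotC u v : dot u v = dot v u.
Proof. by rewrite !dotE; apply: eq_bigr => i _; exact: mulrC. Qed.

Lemma dotDl u v w : dot (u + v) w = dot u w + dot v w.
Proof. by rewrite !dotE -big_split; apply: eq_bigr => i _; rewrite mxE mulrDl. Qed.

Lemma dotZl a u v : dot (a *: u) v = a * dot u v.
Proof. by rewrite !dotE mulr_sumr; apply: eq_bigr => i _; rewrite mxE mulrA. Qed.

Lemma dotNl u v : dot (- u) v = - dot u v.
Proof. by rewrite -scaleN1r dotZl mulN1r. Qed.

Lemma dotBl u v w : dot (u - v) w = dot u w - dot v w.
Proof. by rewrite dotDl dotNl. Qed.

Lemma dotDr u v w : dot u (v + w) = dot u v + dot u w.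
Proof. by rewrite dotC dotDl !(dotC u). Qed.
Lemma dotZr a u v : dot u (a *: v) = a * dot u v.
Proof. by rewrite dotC dotZl dotC. Qed.
Lemma dotNr u v : dot u (- v) = - dot u v.
Proof. by rewrite dotC dotNl dotC. Qed.
Lemma dotBr u v w : dot u (v - w) = dot u v - dot u w.
Proof. by rewrite dotDr dotNr. Qed.
Lemma dot0l v : dot 0 v = 0.
Proof. by rewrite dotE big1 // => i _; rewrite mxE mul0r. Qed.
Lemma dot0r v : dot v 0 = 0.
Proof. by rewrite dotC dot0l. Qed.

Lemma dot_mul u M v : dot u (M *m v) = dot (M^T *m u) v.
Proof. by rewrite /dot trmx_mul trmxK mulmxA. Qed.

Lemma dot_sym u M v : M^T = M -> dot u (M *m v) = dot v (M *m u).
Proof. by move=> hM; rewrite dot_mul hM dotC. Qed.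

Lemma mulmx_dot m (r : 'M[R]_(m, 1)) u v : r *m (u^T *m v) = dot u v *: r.
Proof. by rewrite {1}[u^T *m v]mx11_scalar mul_mx_scalar. Qed.

Lemma dot_mulmx p u v (r : 'M[R]_(1, p)) : (u^T *m v) *m r = dot u v *: r.
Proof. by rewrite {1}[u^T *m v]mx11_scalar mul_scalar_mx. Qed.

Lemma tr_outer u v : \tr (u *m v^T) = dot v u.
Proof.
by rewrite mxtrace_mulC {1}[v^T *m u]mx11_scalar mxtrace_scalar.
Qed.

Lemma tr_Mouter M u v : \tr (M *m (u *m v^T)) = dot v (M *m u).
Proof. by rewrite mulmxA tr_outer. Qed.

Definition psd M := forall v, 0 <= dot v (M *m v).

Lemma dot_self_ge0 v : 0 <= dot v v.
Proof. by rewrite dotE; apply: sumr_ge0 => i _; rewrite -expr2 sqr_ge0. Qed.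

Lemma dot_self_gt0 v : v != 0 -> 0 < dot v v.
Proof.
move=> hv; rewrite lt_def dot_self_ge0 andbT; apply/eqP => h0.
move: hv; rewrite dotE in h0 => /eqP; apply; apply/matrixP => i j.
rewrite (ord1 j) mxE.
have hnn : forall k : 'I_n, true -> 0 <= v k 0 * v k 0.
  by move=> k _; rewrite -expr2 sqr_ge0.
have := psumr_eq0P hnn h0 (i:=i) isT.
by move/eqP; rewrite mulf_eq0 orbb => /eqP.
Qed.


Lemma quad_expand M u v t : M^T = M ->
  dot (u + t *: v) (M *m (u + t *: v)) =
  dot u (M *m u) + 2 * t * dot u (M *m v) + t ^+ 2 * dot v (M *m v).
Proof.
move=> hM; rewrite mulmxDr -scalemxAr dotDl !dotDr !dotZl !dotZr.
rewrite (dot_sym v u hM); ring.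
Qed.

Lemma CS M u v : M^T = M -> psd M ->
  dot u (M *m v) ^+ 2 <= dot u (M *m u) * dot v (M *m v).
Proof.
move=> hM hp.
set a := dot u (M *m u); set b := dot u (M *m v); set c := dot v (M *m v).
have hq : forall t, 0 <= a + 2 * t * b + t ^+ 2 * c.
  by move=> t; rewrite -quad_expand.
have ha : 0 <= a by apply: hp.
have hc : 0 <= c by apply: hp.
have [c0|cpos] := eqVneq c 0.
  have [b0|bn0] := eqVneq b 0; first by rewrite b0 c0; lra.
  have := hq (- (a + 1) / (2 * b)); rewrite c0 mulr0 addr0.
  have -> : 2 * (- (a + 1) / (2 * b)) * b = - (a + 1) by field; rewrite bn0.
  lra.
have cp : 0 < c by rewrite lt_def cpos hc.
have := hq (- b / c).
have -> : a + 2 * (- b / c) * b + (- b / c) ^+ 2 * c = (a * c - b ^+ 2) / c.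
  by field; rewrite cpos.
rewrite pmulr_lge0 ?invr_gt0 //; lra.
Qed.


Lemma dot_delta i w : dot (delta_mx i (0:'I_1)) w = w i 0.
Proof. by rewrite /dot trmx_delta -rowE mxE. Qed.

Lemma mul_delta M j i : (M *m delta_mx j (0:'I_1)) i 0 = M i j.
Proof. by rewrite -colE mxE. Qed.

Lemma outer_entry u v i k : (u *m v^T) i k = u i 0 * v k 0.
Proof. by rewrite mxE big_ord1 mxE. Qed.

Lemma entry_subZ (A B : 'M[R]_n) a i k : (A - a *: B) i k = A i k - a * B i k.
Proof. by rewrite !mxE. Qed.

Definition supp k M := forall i j : 'I_n, ((i < k) || (j < k))%N -> M i j = 0.

Lemma symE M i j : M^T = M -> M i j = M j i.
Proof. by move=> hM; rewrite -{1}hM mxE. Qed.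

Lemma decomp m : forall Q, Q^T = Q -> psd Q -> supp (n - m) Q ->
  exists s : seq 'cV[R]_n, Q = \sum_(d <- s) d *m d^T.
Proof.
elim: m => [|m IH] Q hQ hp hs.
  exists [::]; rewrite big_nil; apply/matrixP => i j; rewrite mxE.
  by apply: hs; rewrite subn0 ltn_ord.
have [lenm|ltmn] := leqP n m.
  apply: IH => // i j hij; apply: hs.
  by have -> : (n - m.+1 = n - m)%N by lia.
have hj : (n - m.+1 < n)%N by lia.
set j := Ordinal hj.
have hnm : (n - m = j.+1)%N by rewrite /=; lia.
set p := Q j j.
have hpdot : p = dot (delta_mx j (0:'I_1)) (Q *m delta_mx j (0:'I_1)) by rewrite dot_delta mul_delta.
have p0 : 0 <= p by rewrite hpdot; apply: hp.
have hcol : forall i, Q i j ^+ 2 <= Q i i * p.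
  move=> i; have := CS (delta_mx i (0:'I_1)) (delta_mx j (0:'I_1)) hQ hp.
  by rewrite !dot_delta !mul_delta.
have [pz|pnz] := eqVneq p 0.
  have hcz : forall i, Q i j = 0.
    move=> i; have := hcol i; rewrite pz mulr0 => h.
    by apply/eqP; rewrite -sqrf_eq0 eq_le h sqr_ge0.
  apply: IH => //; rewrite hnm => i k hik.
  have [h|h] := boolP ((i < j) || (k < j))%N; first by apply: hs.
  have [hi|hi] : (nat_of_ord i = nat_of_ord j) \/ (nat_of_ord k = nat_of_ord j) by lia.
  - have -> : i = j by apply: val_inj.
    by rewrite (symE j k hQ).
  - have -> : k = j by apply: val_inj.
    exact: hcz.
have pp : 0 < p by rewrite lt_def pnz p0.
set c := Q *m delta_mx j (0:'I_1).
have hc : forall i, c i 0 = Q i j by move=> i; rewrite mul_delta.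
have hcE : c = Q *m delta_mx j (0:'I_1) by [].
clearbody c.
set Q' := Q - p^-1 *: (c *m c^T).
have hQ' : Q'^T = Q'.
  by rewrite /Q' linearB /= linearZ /= trmx_mul trmxK hQ.
have hp' : psd Q'.
  move=> v; rewrite /Q' mulmxBl -scalemxAl -mulmxA mulmx_dot dotBr !dotZr (dotC c v).
  have := CS v (delta_mx j (0:'I_1)) hQ hp; rewrite -hpdot -hcE.
  set d := dot v c; set q := dot v (Q *m v) => hcs.
  have -> : q - p^-1 * (d * d) = (q * p - d ^+ 2) / p by field.
  by apply: divr_ge0; lra.
have hs' : supp (n - m) Q'.
  rewrite hnm => i k hik; rewrite /Q' entry_subZ outer_entry !hc.
  have [h|h] := boolP ((i < j) || (k < j))%N.
    case/orP: h => h.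
    - rewrite (hs i k) ?(hs i j) /= ?h //; ring.
    - rewrite (hs i k) ?(hs k j) /= ?h ?orbT //; ring.
  have [hi|hi] : (nat_of_ord i = nat_of_ord j) \/ (nat_of_ord k = nat_of_ord j) by lia.
  - have -> : i = j by apply: val_inj.
    rewrite -/p (symE k j hQ); field; exact: pnz.
  - have -> : k = j by apply: val_inj.
    rewrite -/p; field; exact: pnz.
have [s' hs's] := IH Q' hQ' hp' hs'.
exists (((Num.sqrt p)^-1 *: c) :: s'); rewrite big_cons -hs's.
rewrite linearZ /= -scalemxAr -scalemxAl scalerA -expr2 exprVn sqr_sqrtr //.
by rewrite /Q' addrC subrK.
Qed.

Lemma tr_psd_ge0 P Q : psd P -> Q^T = Q -> psd Q -> 0 <= \tr (P *m Q).
Proof.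
move=> hP hQ hq.
have h0 : supp (n - n) Q by move=> i j; rewrite subnn.
have [s ->] := decomp hQ hq h0.
rewrite mulmx_sumr (big_morph _ (@mxtraceD _ n) (mxtrace0 _ _)).
by apply: sumr_ge0 => d _; rewrite tr_Mouter; apply: hP.
Qed.

End Dot.

Section Step.
Variable R : realType.
Variable n : nat.
Implicit Types (u v w g s y : 'cV[R]_n) (M H A B : 'M[R]_n).

Lemma trV s y (r : R) : (1%:M - r *: (s *m y^T))^T = 1%:M - r *: (y *m s^T) :> 'M[R]_n.
Proof. by rewrite linearB /= linearZ /= trmx1 trmx_mul trmxK. Qed.

Lemma upd_apply H s y u :
  bfgs_update H s y *m u =
  let r := (dot s y)^-1 in
  let t := H *m (u - (r * dot s u) *: y) in
  t - (r * dot y t) *: s + (r * dot s u) *: s.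
Proof.
rewrite /bfgs_update /= -/(dot s y) trV.
set r := (dot s y)^-1.
rewrite (mulmxDl _ _ u).
rewrite -!mulmxA.
rewrite mulmxBl.
rewrite mul1mx.
rewrite -scalemxAl.
rewrite -mulmxA mulmx_dot scalerA.
rewrite mulmxBl mul1mx -scalemxAl -mulmxA mulmx_dot scalerA.
by rewrite -scalemxAl -mulmxA mulmx_dot scalerA.
Qed.


Lemma upd_inv H B g s y v : H^T = H -> H *m B = 1%:M -> s = - (H *m g) ->
  dot s y != 0 -> dot g (H *m g) != 0 ->
  bfgs_update H s y *m ((B - (dot g (H *m g))^-1 *: (g *m g^T)
      + (dot s y)^-1 *: (y *m y^T)) *m v) = v.
Proof.
move=> hH HB hs sy0 G0.
set r := (dot s y)^-1; set k := (dot g (H *m g))^-1; set w := B *m v.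
have hHw : H *m w = v by rewrite /w mulmxA HB mul1mx.
have hHg : H *m g = - s by rewrite hs opprK.
have hu : (B - k *: (g *m g^T) + r *: (y *m y^T)) *m v
          = w - (k * dot g v) *: g + (r * dot y v) *: y.
  by rewrite !mulmxDl mulNmx -!scalemxAl -!mulmxA !mulmx_dot !scalerA.
rewrite hu upd_apply /= -/r.
have hsw : dot s w = - dot g v.
  by rewrite hs dotNl dotC (dot_sym _ _ hH) hHw.
have hsg : dot s g = - dot g (H *m g).
  by rewrite hs dotNl dotC.
have -> : dot s (w - (k * dot g v) *: g + (r * dot y v) *: y) = dot y v.
  rewrite dotDr dotBr !dotZr hsw hsg /k /r; field; rewrite sy0 G0 //.
rewrite addrK mulmxBr -scalemxAr hHw hHg scalerN opprK.
rewrite dotDr dotZr (dotC y s).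
apply/matrixP => i j; rewrite !mxE /r; field; exact: sy0.
Qed.


Lemma upd_sym H s y : H^T = H -> (bfgs_update H s y)^T = bfgs_update H s y.
Proof.
move=> hH; rewrite /bfgs_update /=; set V := (1%:M - _).
rewrite linearD /= !trmx_mul trmxK hH mulmxA; congr (_ + _).
by rewrite linearZ /= trmx_mul trmxK.
Qed.

Lemma upd_quad H s y v :
  dot v (bfgs_update H s y *m v) =
  let z := v - ((dot s y)^-1 * dot s v) *: y in
  dot z (H *m z) + (dot s y)^-1 * dot s v ^+ 2.
Proof.
rewrite upd_apply /=; set r := (dot s y)^-1; set z := v - _ *: y.
rewrite dotDr dotBr !dotZr {1 3}/z dotBl dotZl (dotC v s); ring.
Qed.

Lemma upd_pd H s y v : H^T = H -> (forall u, u != 0 -> 0 < dot u (H *m u)) ->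
  0 < dot s y -> v != 0 -> 0 < dot v (bfgs_update H s y *m v).
Proof.
move=> hH hpd sy0 v0; rewrite upd_quad /=.
have r0 : 0 < (dot s y)^-1 by rewrite invr_gt0.
have [sv0|sv0] := eqVneq (dot s v) 0.
  rewrite sv0 mulr0 scale0r subr0 expr0n /= mulr0 addr0; exact: hpd.
set z := v - _ *: y.
have hz : 0 <= dot z (H *m z).
  have [->|z0] := eqVneq z 0; first by rewrite dot0l.
  exact/ltW/hpd.
have sv2 : 0 < dot s v ^+ 2 by rewrite lt_def sqrf_eq0 sv0 sqr_ge0.
have := mulr_gt0 r0 sv2; lra.
Qed.


Lemma mx_ext M N : (forall v : 'cV[R]_n, M *m v = N *m v) -> M = N.
Proof.
move=> h; apply/matrixP => i j; have := h (delta_mx j (0:'I_1)).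
by rewrite -!colE => /matrixP /(_ i 0); rewrite !mxE.
Qed.

Lemma tr_outerM M u : \tr (u *m u^T *m M) = dot u (M *m u).
Proof. by rewrite mxtrace_mulC tr_Mouter. Qed.

Lemma VTAV A s y (r : R) : A^T = A -> y = A *m s -> r * dot s y = 1 ->
  (1%:M - r *: (y *m s^T)) *m A *m (1%:M - r *: (s *m y^T)) = A - r *: (y *m y^T).
Proof.
move=> hA hy hr; apply: mx_ext => v.
rewrite -!mulmxA !mulmxBl !mul1mx -!scalemxAl -!mulmxA !mulmx_dot !scalerA.
rewrite mulmxBr -scalemxAr -hy dotBr dotZr (dot_sym _ _ hA) -hy (dotC y v).
by rewrite mulrAC hr mul1r subrr mulr0 scale0r subr0.
Qed.

Lemma upd_trace H A s y : A^T = A -> y = A *m s -> dot s y != 0 ->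
  \tr (bfgs_update H s y *m A) = \tr (H *m A) + 1 - dot y (H *m y) / dot s y.
Proof.
move=> hA hy sy0; rewrite /bfgs_update /= -/(dot s y); set r := (dot s y)^-1.
have hr : r * dot s y = 1 by rewrite mulVf.
rewrite (mulmxDl _ _ A) mxtraceD -scalemxAl mxtraceZ tr_outerM -hy.
rewrite -!mulmxA mxtrace_mulC -!mulmxA trV.
rewrite (mulmxA (1%:M - _) A) (VTAV hA hy hr) hr mulmxBr -scalemxAr.
rewrite linearB /= mxtraceZ tr_Mouter; ring.
Qed.


Lemma trB' B Ai g y (k r : R) :
  \tr ((B - k *: (g *m g^T) + r *: (y *m y^T)) *m Ai)
  = \tr (B *m Ai) - k * dot g (Ai *m g) + r * dot y (Ai *m y).
Proof.
by rewrite !mulmxDl mulNmx -!scalemxAl !mxtraceD linearN /= !mxtraceZ !tr_outerM.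
Qed.

Lemma key_real (d t a : R) : 0 < d -> 0 < t -> t <= a -> 1 <= d * t ->
  0 <= a + d - 2 /\ (a + d - 2 <= 1/4 -> d - 2 + t <= d / 2).
Proof.
move=> d0 t0 ta dt.
have h1 : 4 <= (t + d) ^+ 2.
  have := sqr_ge0 (t - d); rewrite !expr2; nra.
have h2 : 2 <= t + d.
  rewrite leNgt; apply/negP => h; move: h1; rewrite expr2.
  have : (t + d) * (t + d) < 2 * 2 by apply: ltr_pM; lra.
  lra.
split; first by lra.
move=> h.
have [dh|dh] := leP (1/2) d; first lra.
nra.
Qed.


Definition pd M := forall v, v != 0 -> 0 < dot v (M *m v).

Lemma spdE M : spd M <-> M^T = M /\ pd M.
Proof.
rewrite /spd /pd; split=> [[h1 h2]|[h1 h2]]; split=> // v v0;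
  [by have := h2 v v0; rewrite -mulmxA | by rewrite -mulmxA; apply: h2].
Qed.

Lemma pd_psd M : pd M -> psd M.
Proof.
move=> h v; have [->|v0] := eqVneq v 0; first by rewrite dot0l.
exact/ltW/h.
Qed.

Lemma pd_unit M : pd M -> M \in unitmx.
Proof.
move=> h; rewrite unitmxE unitfE; apply/negP => /det0P [v v0 hv].
have hu : M^T *m v^T = 0 by rewrite -trmx_mul hv trmx0.
have vT0 : v^T != 0 by apply: contraNneq v0 => h0; rewrite -(trmxK v) h0 trmx0.
have := h _ vT0; rewrite dotC -{1}(trmxK M) -dot_mul hu dot0r ltxx //.
Qed.

Lemma pd_inv_psd M : pd M -> psd (invmx M).
Proof.
move=> h v; have hu := pd_unit h.
have -> : dot v (invmx M *m v) = dot (invmx M *m v) (M *m (invmx M *m v)).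
  by rewrite mulmxA mulmxV // mul1mx dotC.
exact: pd_psd.
Qed.

Lemma inv_sym M : M^T = M -> (invmx M)^T = invmx M.
Proof. by move=> h; rewrite trmx_inv h. Qed.

Lemma inv_eq M N : M *m N = 1%:M -> invmx M = N.
Proof.
move=> h; have [hM _] := mulmx1_unit h.
by rewrite -[invmx M]mulmx1 -h mulmxA mulVmx // mul1mx.
Qed.



Lemma quadfE A b c x : quadf A b c x = dot x (A *m x) / 2 + dot b x + c.
Proof. by rewrite /quadf /dot mulmxA. Qed.

Lemma quadf_shift A b c xs e : A^T = A ->
  quadf A b c (xs + e) = quadf A b c xs + dot e (A *m xs + b) + dot e (A *m e) / 2.
Proof.
move=> hA; rewrite !quadfE mulmxDr !dotDl !dotDr (dot_sym xs e hA) (dotC b e).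
by field.
Qed.

Lemma grad0 A b c xs : A^T = A -> pd A ->
  (forall x, quadf A b c xs <= quadf A b c x) -> A *m xs + b = 0.
Proof.
move=> hA hpd hmin; set g := A *m xs + b.
have [//|g0] := eqVneq g 0.
set p := dot g g; set q := dot g (A *m g).
have pp : 0 < p by apply: dot_self_gt0.
have qp : 0 < q by apply: hpd.
have := hmin (xs + (- (p / q)) *: g).
rewrite quadf_shift // -scalemxAr !dotZl !dotZr -/p -/q -addrA.
have -> : - (p / q) * p + - (p / q) * (- (p / q) * q) / 2 = - ((p ^+ 2 / q) / 2).
  by field; rewrite lt0r_neq0.
move=> h; have : 0 < p ^+ 2 / q / 2 by rewrite !divr_gt0 // exprn_gt0.
move=> h2; exfalso; move: h h2; clear; lra.
Qed.

Definition Fv A xs x := dot (x - xs) (A *m (x - xs)).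
Definition Phi A H := \tr (H *m A) + \tr (invmx H *m invmx A).

Lemma quadf_Fv A b c xs x : A^T = A -> A *m xs + b = 0 ->
  quadf A b c x = quadf A b c xs + Fv A xs x / 2.
Proof.
move=> hA hb; have {1}-> : x = xs + (x - xs) by rewrite addrC subrK.
by rewrite quadf_shift // hb dot0r addr0.
Qed.

Lemma lin3 u w b : u + w + b - (u + b) = w.
Proof. by apply/matrixP => i j; rewrite !mxE; ring. Qed.

Lemma Phi_ge0 A H : A^T = A -> pd A -> pd H -> 0 <= Phi A H.
Proof.
move=> hA hApd hHpd; apply: addr_ge0.
  by apply: tr_psd_ge0 => //; apply: pd_psd.
apply: tr_psd_ge0; [exact: pd_inv_psd | exact: inv_sym | exact: pd_inv_psd].
Qed.


Lemma step_main A b c xs x H : A^T = A -> pd A -> A *m xs + b = 0 ->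
  H^T = H -> pd H ->
  let st := bfgs_step A b c (x, H) in
  [/\ st.2^T = st.2, pd st.2, Phi A st.2 <= Phi A H, Fv A xs st.1 <= Fv A xs x &
     (4 * (Phi A H - Phi A st.2) <= 1 -> 2 * Fv A xs st.1 <= Fv A xs x)].
Proof.
move=> hA hApd hb hH hHpd /=.
have hb' : b = - (A *m xs) by apply/eqP; rewrite -addr_eq0 addrC hb.
set g := quadgrad A b x.
set e := x - xs.
have hg : g = A *m e by rewrite /g /quadgrad /e hb' mulmxBr.
have hF : Fv A xs x = dot e g by rewrite hg.
case: (eqVneq g 0) => [g0|gn0] /=.
  by rewrite hF g0 dot0r; split => // _; rewrite mulr0.
set s := - (H *m g).
set y := quadgrad A b (x + s) - g.
have hy : y = A *m s by rewrite /y /g /quadgrad mulmxDr lin3.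
set H' := bfgs_update H s y.
set F := dot e (A *m e).
set G := dot g (H *m g).
set S := dot s y.
set T := dot y (H *m y).
have e0 : e != 0 by apply: contraNneq gn0 => h; rewrite hg h mulmx0.
have Fp : 0 < F by apply: hApd.
have Gp : 0 < G by apply: hHpd.
have hHg : H *m g = - s by rewrite opprK.
have hGs : G = - dot g s by rewrite /G hHg dotNr.
have s0 : s != 0.
  by apply: contraTneq Gp => h; rewrite hGs h dot0r oppr0 ltxx.
have Sp : 0 < S by rewrite /S hy; apply: hApd.
have Tp : 0 <= T by apply: pd_psd.
have hGe : G = - dot e (A *m s).
  by rewrite hGs hg dotC (dot_sym _ _ hA).
have hSe : S = - dot g (H *m y).
  by rewrite /S /s dotNl (dotC (H *m g)) (dot_sym _ _ hH).
have CS1 : G ^+ 2 <= F * S.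
  by rewrite hGe sqrrN /S hy; apply: CS => //; apply: pd_psd.
have CS2 : S ^+ 2 <= G * T.
  by rewrite {1}hSe sqrrN; apply: CS => //; apply: pd_psd.
have hFs : Fv A xs (x + s) = F - 2 * G + S.
  rewrite /Fv (_ : x + s - xs = e + s); last by rewrite /e addrAC.
  rewrite mulmxDr (dotDl e s) !(dotDr e) !(dotDr s) (dot_sym s e hA) hGe /S hy /F; ring.
have hq : (quadf A b c (x + s) < quadf A b c x) = (Fv A xs (x + s) < Fv A xs x).
  rewrite (quadf_Fv c (x + s) hA hb) (quadf_Fv c x hA hb) ltrD2l; apply/idP/idP => h.
    by rewrite -(ltr_pM2r (x:=2^-1)) ?invr_gt0.
  by rewrite ltr_pM2r ?invr_gt0.
have S0 : S != 0 by rewrite lt0r_neq0.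
have G0 : G != 0 by rewrite lt0r_neq0.
have hHu : H \in unitmx := pd_unit hHpd.
have hAu : A \in unitmx := pd_unit hApd.
have hinv : invmx H' = invmx H - G^-1 *: (g *m g^T) + S^-1 *: (y *m y^T).
  apply: inv_eq; apply: mx_ext => v; rewrite -mulmxA mul1mx.
  by apply: upd_inv => //; rewrite mulmxV.
have htr1 : \tr (H' *m A) = \tr (H *m A) + 1 - T / S := upd_trace H hA hy S0.
have e1 : dot g (invmx A *m g) = F by rewrite hg mulmxA mulVmx // mul1mx dotC.
have e2 : dot y (invmx A *m y) = S by rewrite /S {2}hy mulmxA mulVmx // mul1mx dotC.
have htr2 : \tr (invmx H' *m invmx A) = \tr (invmx H *m invmx A) - F / G + 1.
  by rewrite hinv trB' e1 e2; field; rewrite S0 G0.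
have hPhi : Phi A H' = Phi A H - (T / S + F / G - 2) by rewrite /Phi htr1 htr2; ring.
have [hD1 hD2] : 0 <= T / S + F / G - 2 /\
    (T / S + F / G - 2 <= 1/4 -> F / G - 2 + S / G <= F / G / 2).
  apply: key_real; rewrite ?divr_gt0 //.
    rewrite -subr_ge0.
    have -> : T / S - S / G = (G * T - S ^+ 2) / (S * G) by field; rewrite S0 G0.
    by rewrite divr_ge0 ?subr_ge0 // mulr_ge0 // ltW.
  rewrite -subr_ge0.
  have -> : F / G * (S / G) - 1 = (F * S - G ^+ 2) / (G ^+ 2) by field; rewrite G0.
  by rewrite divr_ge0 ?subr_ge0 // sqr_ge0.
have hFx : Fv A xs x = F by [].
have hFs2 : 4 * (T / S + F / G - 2) <= 1 -> Fv A xs (x + s) <= F / 2.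
  move=> h4; have := hD2 ltac:(lra); rewrite hFs => h.
  have -> : F - 2 * G + S = G * (F / G - 2 + S / G) by field.
  have -> : F / 2 = G * (F / G / 2) by field.
  by rewrite ler_pM2l.
split.
- exact: upd_sym.
- by move=> v v0; apply: upd_pd.
- by rewrite hPhi; lra.
- case: ifP => h; last by [].
  by move: h; rewrite hq => /ltW.
- rewrite hPhi hFx => h4.
  have h5 : 4 * (T / S + F / G - 2) <= 1 by lra.
  have h6 := hFs2 h5.
  case: ifP => h; first by lra.
  move: h; rewrite hq hFx => /negbT; rewrite -leNgt => h; exfalso.
  have hh : forall a b : R, 0 < a -> a <= b -> b <= a / 2 -> False by move=> a0 b0; lra.
  exact: hh Fp h h6.
Qed.

End Step.

Unset Implicit Arguments.

Lemma pow2_ge (R : realType) (k : nat) : (k.+1)%:R <= (2 : R) ^+ k.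
Proof.
elim: k => [|k IH]; first by rewrite expr0.
rewrite exprS -[(k.+2)%:R]natr1 (_ : (2:R) * 2 ^+ k = 2 ^+ k + 2 ^+ k); last by ring.
apply: lerD IH _; apply: exprn_ege1; lra.
Qed.

Lemma coord_bound (R : realType) (n : nat) (A : 'M[R]_n) (e : 'cV[R]_n) i :
  A^T = A -> pd A ->
  e i 0 ^+ 2 <= \tr (invmx A) * dot e (A *m e).
Proof.
move=> hA hpd; have hAu := pd_unit hpd.
set w := invmx A *m delta_mx i (0:'I_1).
have hw : A *m w = delta_mx i 0 by rewrite /w mulmxA mulmxV // mul1mx.
have h1 : dot w (A *m e) = e i 0 by rewrite (dot_sym _ _ hA) hw dotC dot_delta.
have h2 : dot w (A *m w) = invmx A i i.
  by rewrite hw dotC dot_delta /w mul_delta.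
have := CS w e hA (pd_psd hpd); rewrite h1 h2 => h.
apply: (le_trans h); apply: ler_wpM2r; first exact: pd_psd.
rewrite /mxtrace (bigD1 i) //= lerDl; apply: sumr_ge0 => j _.
have := pd_inv_psd hpd (delta_mx j 0); rewrite dot_delta mul_delta //.
Qed.

Lemma pow2_mono (R : realType) (m M : nat) : (m <= M)%N -> (2 : R) ^+ m <= 2 ^+ M.
Proof.
move=> h; rewrite -(subnKC h) exprD ler_peMr ?exprn_ge0 //; apply: exprn_ege1; lra.
Qed.

Lemma sq_lt (R : realType) (a eps : R) : 0 < eps -> a ^+ 2 < eps ^+ 2 -> `|a| < eps.
Proof.
move=> he; rewrite -(real_normK (num_real a)) => h.
have := normr_ge0 a; move: h; set t := `|a|; move=> h ht.
rewrite ltNge; apply/negP => h'; have := ler_pM (ltW he) (ltW he) h' h'.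
rewrite -!expr2; lra.
Qed.

Theorem mainTheorem5 (R : realType) (n : nat) (A : 'M[R]_n) (b : 'cV[R]_n) (c : R)
  (xstar x0 : 'cV[R]_n) (H0 : 'M[R]_n) :
  spd A ->
  (forall x : 'cV[R]_n, quadf A b c xstar <= quadf A b c x) ->
  spd H0 ->
  (fun k => (bfgs_seq A b c x0 H0 k).1) @ \oo --> xstar.
Proof.
move=> hAspd hmin hHspd.
have [hA hApd] := (spdE A).1 hAspd.
have [hH0 hH0pd] := (spdE H0).1 hHspd.
have hb : A *m xstar + b = 0 by apply: grad0 hA hApd hmin.
set st := bfgs_seq A b c x0 H0.
set Phi0 := Phi A H0. set F0 := Fv A xstar x0.
have Fge0 : forall x, 0 <= Fv A xstar x by move=> x; apply: pd_psd.
have inv : forall k, (st k).2^T = (st k).2 /\ pd (st k).2 /\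
    exists m : nat, m%:R <= 4 * (Phi0 - Phi A (st k).2) /\
      Fv A xstar (st k).1 * 2 ^+ k <= F0 * 2 ^+ m.
  elim => [|k [hHk [hpdk [m [hm hF]]]]].
    split => //; split => //; exists 0%N; rewrite /= subrr mulr0 expr0 !mulr1.
    by split.
  have hst : st k.+1 = bfgs_step A b c (st k) by rewrite /st /bfgs_seq iterS.
  rewrite hst; move: hHk hpdk hm hF; case: (st k) => x H /= hHk hpdk hm hF.
  have [h1 h2 h3 h4 h5] := step_main c x hA hApd hb hHk hpdk.
  move: h1 h2 h3 h4 h5; set st' := bfgs_step A b c (x, H) => h1 h2 h3 h4 h5.
  split => //; split => //.
  have p2 : 0 < (2:R) ^+ k by rewrite exprn_gt0.
  case: (lerP (4 * (Phi A H - Phi A st'.2)) 1) => hc.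
  - exists m; split; first lra.
    apply: le_trans hF; rewrite exprS mulrA (mulrC _ 2).
    by apply: ler_wpM2r; [exact: ltW | exact: h5].
  - exists m.+1; split; first by rewrite -natr1; lra.
    rewrite !exprS.
    apply: (le_trans (ler_wpM2r _ h4)); first by rewrite mulr_ge0 // ltW.
    rewrite mulrCA (mulrCA F0); apply: ler_wpM2l => //.
have Phi0ge : 0 <= Phi0 by apply: Phi_ge0.
set M := Num.Def.archi_bound (4 * Phi0).
have hM : 4 * Phi0 < M%:R by apply: archi_boundP; lra.
have F0ge : 0 <= F0 by apply: Fge0.
have hbound : forall k, Fv A xstar (st k).1 * 2 ^+ k <= F0 * 2 ^+ M.
  move=> k; have [_ [hpdk [m [hm hF]]]] := inv k.
  apply: (le_trans hF); apply: ler_wpM2l => //; apply: pow2_mono.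
  have hPk : 0 <= Phi A (st k).2 by apply: Phi_ge0.
  have : (m%:R : R) < M%:R by lra.
  by rewrite ltr_nat => /ltnW.
set C := \tr (invmx A).
have Cge : 0 <= C.
  rewrite /C /mxtrace; apply: sumr_ge0 => j _.
  by have := pd_inv_psd hApd (delta_mx j 0); rewrite dot_delta mul_delta.
set K := C * (F0 * 2 ^+ M).
have Kge : 0 <= K by rewrite mulr_ge0 // mulr_ge0 // exprn_ge0.
apply/cvgrPdist_lt => eps eps0.
have e2p : 0 < eps ^+ 2 by rewrite exprn_gt0.
set N := Num.Def.archi_bound (K / eps ^+ 2).
have hN : K / eps ^+ 2 < N%:R by apply: archi_boundP; rewrite divr_ge0 // ltW.
exists N => // k /= hk.
have -> : `|xstar - (st k).1| = mx_norm (xstar - (st k).1) by [].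
rewrite mx_normrE; apply: bigmax_lt => // -[i j] _ /=.
rewrite (ord1 j) !mxE distrC.
have -> : (st k).1 i 0 - xstar i 0 = ((st k).1 - xstar) i 0 by rewrite !mxE.
apply: sq_lt => //.
have hc := @coord_bound R n A ((st k).1 - xstar) i hA hApd.
have p2 : 0 < (2:R) ^+ k by rewrite exprn_gt0.
rewrite -(ltr_pM2r p2).
apply: (le_lt_trans (ler_wpM2r (ltW p2) hc)).
rewrite -mulrA; apply: (le_lt_trans (ler_wpM2l Cge (hbound k))).
rewrite -/K.
have h1 : K < eps ^+ 2 * N%:R by rewrite -ltr_pdivrMl // mulrC.
apply: (lt_le_trans h1); apply: ler_wpM2l; first exact: ltW.
apply: (le_trans _ (pow2_ge R k)); rewrite ler_nat; exact: leqW.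
Qed.
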